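(* Let $L\in\mathcal{N}$ and assume that $L$ has no doubly reducible elements. Then there do not exist twelve distinct elements $x',x,b,z,z',w',w,a,s,y,y',c\in L$ such that the subposet of $L$ they form is the poset whose order is generated by the relations $$x'<x<b<z<z',\quad w'<w<a<s<y<y',\quad w'<x',\ w<x,\ a<c<b,\ y<z,\ y'<z'$$ (i.e. its Hasse diagram consists of exactly these covering relations), and such that the sublattice of $L$ generated by $\{x',x,b,z,z',w',w,a,y,y'\}$ is isomorphic to $\mathbf{2}\times\mathbf{5}$ (with $x'<x<b<z<z'$ and $w'<w<a<y<y'$ the two five-element chains and $w'<x'$, $w<x$, $a<b$, $y<z$, $y'<z'$ the rungs).
   Context: $\mathcal{N}$ denotes the variety of lattices generated by the pentagon $N_5$. For elements $u,v$, $u\parallel v$ means neither $u\le v$ nor $v\le u$. An element $e$ of a lattice $L$ is doubly reducible if there exist $e_1,e_2,e_3,e_4\in L$ with $e_1\parallel e_2$, $e_3\parallel e_4$ and $e=e_1\vee e_2=e_3\wedge e_4$. $\mathbf{n}$ denotes the $n$-element chain and $\times$ the direct product of posets. *)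

(* Defs.v *)
From HB Require Import structures.
From mathcomp Require Import all_boot all_order.
Set Implicit Arguments. Unset Strict Implicit. Unset Printing Implicit Defensive.
Import Order.TTheory.
Local Open Scope order_scope.

Inductive lterm : Type :=
| LVar of nat
| LMeet of lterm & lterm
| LJoin of lterm & lterm.

Fixpoint leval (T : Type) (m j : T -> T -> T) (v : nat -> T) (t : lterm) : T :=
  match t with
  | LVar n => v n
  | LMeet t1 t2 => m (leval m j v t1) (leval m j v t2)
  | LJoin t1 t2 => j (leval m j v t1) (leval m j v t2)
  end.

Inductive n5 : Type := N0 | Na | Nb | Nc | N1.

Definition le5 (x y : n5) : bool :=
  match x, y with
  | N0, _ => true
  | _, N1 => true
  | Na, Na | Na, Nb | Nb, Nb | Nc, Nc => true
  | _, _ => false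
  end.

Definition meet5 (x y : n5) : n5 :=
  if le5 x y then x else if le5 y x then y else N0.
Definition join5 (x y : n5) : n5 :=
  if le5 x y then y else if le5 y x then x else N1.

(* L lies in the variety N generated by N5: L satisfies every lattice
   identity satisfied by N5 (Birkhoff: HSP(N5) = Mod(Id(N5))). *)
Definition in_N (d : Order.disp_t) (L : latticeType d) : Prop :=
  forall t1 t2 : lterm,
    (forall v : nat -> n5, leval meet5 join5 v t1 = leval meet5 join5 v t2) ->
    forall v : nat -> L,
      leval (@Order.meet d L) (@Order.join d L) v t1 =
      leval (@Order.meet d L) (@Order.join d L) v t2.

Definition doubly_reducible (d : Order.disp_t) (L : latticeType d) (e : L) : Prop :=
  exists e1 e2 e3 e4 : L,
    e1 >< e2 /\ e3 >< e4 /\ e = e1 `|` e2 /\ e = e3 `&` e4.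

(* indices: x'=0 x=1 b=2 z=3 z'=4 w'=5 w=6 a=7 s=8 y=9 y'=10 c=11 *)
Definition gen12 : rel 'I_12 := fun i j =>
  (nat_of_ord i, nat_of_ord j) \in
    [:: (0,1); (1,2); (2,3); (3,4);
        (5,6); (6,7); (7,8); (8,9); (9,10);
        (5,0); (6,1); (7,11); (11,2); (9,3); (10,4)].

Definition ord12 : rel 'I_12 := connect gen12.

Definition pts12 (d : Order.disp_t) (L : latticeType d)
  (x' x b z z' w' w a s y y' c : L) : 'I_12 -> L :=
  fun i => nth x' [:: x'; x; b; z; z'; w'; w; a; s; y; y'; c] i.

Definition shape12 (d : Order.disp_t) (L : latticeType d) (f : 'I_12 -> L) : Prop :=
  injective f /\ forall i j : 'I_12, (f i <= f j) = ord12 i j.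

Definition gen_sub (d : Order.disp_t) (L : latticeType d) (S : seq L) (u : L) : Prop :=
  forall P : L -> Prop,
    (forall x, x \in S -> P x) ->
    (forall x y, P x -> P y -> P (x `&` y) /\ P (x `|` y)) ->
    P u.

(* g : 2 x 5 -> L (encoded on pairs (i,j) with i < 2, j < 5; product order,
   meet/join componentwise min/max) is a lattice isomorphism onto the set S. *)
Definition iso_2x5 (d : Order.disp_t) (L : latticeType d)
  (S : L -> Prop) (g : nat -> nat -> L) : Prop :=
  (forall i j i' j', i < 2 -> j < 5 -> i' < 2 -> j' < 5 ->
      g i j = g i' j' -> i = i' /\ j = j')%N /\
  (forall i j i' j', i < 2 -> j < 5 -> i' < 2 -> j' < 5 ->
      g (minn i i') (minn j j') = g i j `&` g i' j' /\
      g (maxn i i') (maxn j j') = g i j `|` g i' j')%N /\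
  (forall u : L, S u <-> exists i j, (i < 2)%N /\ (j < 5)%N /\ g i j = u).

(* Main.v *)
Require Import Defs.
From HB Require Import structures.
From mathcomp Require Import all_boot all_order.
Import Order.TTheory.
Local Open Scope order_scope.
Set Implicit Arguments. Unset Strict Implicit. Unset Printing Implicit Defensive.

Fixpoint lsubst (sb : nat -> lterm) (t : lterm) : lterm :=
  match t with
  | LVar n => sb n
  | LMeet a b => LMeet (lsubst sb a) (lsubst sb b)
  | LJoin a b => LJoin (lsubst sb a) (lsubst sb b)
  end.

Lemma leval_subst (T : Type) (m j : T -> T -> T) v sb t :
  leval m j v (lsubst sb t) = leval m j (fun i => leval m j v (sb i)) t.
Proof. by elim: t => //= a -> b ->. Qed.

Fixpoint lt_vars (k : nat) (t : lterm) : bool :=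
  match t with
  | LVar n => (n < k)%N
  | LMeet a b => lt_vars k a && lt_vars k b
  | LJoin a b => lt_vars k a && lt_vars k b
  end.

Lemma leval_ext (T : Type) (m j : T -> T -> T) k v v' t :
  lt_vars k t -> (forall n, (n < k)%N -> v n = v' n) -> leval m j v t = leval m j v' t.
Proof.
move=> ht hv; elim: t ht => /= [n|a iha b ihb|a iha b ihb]; first exact: hv.
- by case/andP=> /iha -> /ihb ->.
- by case/andP=> /iha -> /ihb ->.
Qed.

Definition n5eqb (a b : n5) : bool :=
  match a, b with
  | N0, N0 | Na, Na | Nb, Nb | Nc, Nc | N1, N1 => true
  | _, _ => false
  end.
Lemma n5eqbP a b : n5eqb a b -> a = b. Proof. by case: a; case: b. Qed.

Fixpoint chk (k : nat) (f : seq n5 -> bool) : bool :=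
  match k with
  | 0 => f [::]
  | k'.+1 => all (fun x => chk k' (fun l => f (x :: l))) [:: N0; Na; Nb; Nc; N1]
  end.

Lemma chkP k f l : chk k f -> size l = k -> f l.
Proof.
elim: k f l => [|k ih] f [|x l] //= h [hs].
apply: (ih (fun l => f (x :: l)) l _ hs).
by case: x h => /= /andP[h1 /andP[h2 /andP[h3 /andP[h4 /andP[h5 _]]]]].
Qed.

Definition tX := LVar 0.
Definition tYp := LVar 1.
Definition tY0 := LMeet (LVar 2) tYp.
Definition stepY t := LJoin tY0 (LMeet tYp (LJoin t tX)).
Definition tY := stepY (stepY (stepY tY0)).
Definition tA0 := LMeet (LVar 3) tY.
Definition stepA t := LJoin tA0 (LMeet tY (LJoin t tX)).
Definition tA := stepA (stepA (stepA tA0)).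
Definition tS := LMeet (LJoin (LVar 4) tA) tY.
Definition tW0 := LMeet (LVar 5) tA.
Definition stepW t := LJoin tW0 (LMeet tA (LJoin t tX)).
Definition tW := stepW (stepW (stepW tW0)).
Definition tC := LMeet (LJoin (LVar 6) tA) (LJoin tA tX).

Definition Rl : seq lterm :=
  [:: tX; LJoin tW tX; LJoin tA tX; LJoin tY tX; LJoin tYp tX; LMeet tW tX;
      tW; tA; tS; tY; tYp; tC].
Definition RR (i : nat) : lterm := nth tC Rl i.

Lemma RR_vars i : lt_vars 7 (RR i).
Proof.
rewrite /RR; case: (ltnP i (size Rl)) => h; last by rewrite nth_default.
by apply: (all_nthP tC _ _ h); vm_compute.
Qed.

Definition stepv (b0 top x t : n5) := join5 b0 (meet5 top (join5 t x)).
Definition iter3 b0 top x := stepv b0 top x (stepv b0 top x (stepv b0 top x b0)).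
Definition Yv (v : nat -> n5) := iter3 (meet5 (v 2) (v 1)) (v 1) (v 0).
Definition Av (v : nat -> n5) Y := iter3 (meet5 (v 3) Y) Y (v 0).
Definition Wv (v : nat -> n5) A := iter3 (meet5 (v 5) A) A (v 0).
Definition forceF (l : seq n5) : seq n5 :=
  let v := fun i => nth N0 l i in
  let X := v 0 in let Yp := v 1 in
  let Y := Yv v in
  let A := Av v Y in
  let S := meet5 (join5 (v 4) A) Y in
  let W := Wv v A in
  let C := meet5 (join5 (v 6) A) (join5 A X) in
  [:: X; join5 W X; join5 A X; join5 Y X; join5 Yp X; meet5 W X; W; A; S; Y; Yp; C].

Section FO.
Variable v : nat -> n5.
Local Notation ev := (leval meet5 join5 v).
Lemma ev_stepY t : ev (stepY t) = stepv (meet5 (v 2) (v 1)) (v 1) (v 0) (ev t). Proof. by []. Qed.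
Lemma ev_tY : ev tY = Yv v. Proof. by rewrite /tY !ev_stepY. Qed.
Lemma ev_stepA t : ev (stepA t) = stepv (meet5 (v 3) (ev tY)) (ev tY) (v 0) (ev t). Proof. by []. Qed.
Lemma ev_tA0 : ev tA0 = meet5 (v 3) (ev tY). Proof. by []. Qed.
Lemma ev_tA : ev tA = Av v (Yv v). Proof. rewrite /tA !ev_stepA ev_tA0 ev_tY. by []. Qed.
Lemma ev_stepW t : ev (stepW t) = stepv (meet5 (v 5) (ev tA)) (ev tA) (v 0) (ev t). Proof. by []. Qed.
Lemma ev_tW0 : ev tW0 = meet5 (v 5) (ev tA). Proof. by []. Qed.
Lemma ev_tW : ev tW = Wv v (Av v (Yv v)). Proof. rewrite /tW !ev_stepW ev_tW0 ev_tA. by []. Qed.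
End FO.

Arguments tY : simpl never.
Arguments tA : simpl never.
Arguments tW : simpl never.
Arguments Yv : simpl never.
Arguments Av : simpl never.
Arguments Wv : simpl never.
Arguments meet5 : simpl never.
Arguments join5 : simpl never.

Lemma ev_join (v : nat -> n5) a b : leval meet5 join5 v (LJoin a b) = join5 (leval meet5 join5 v a) (leval meet5 join5 v b).
Proof. by []. Qed.
Lemma ev_meet (v : nat -> n5) a b : leval meet5 join5 v (LMeet a b) = meet5 (leval meet5 join5 v a) (leval meet5 join5 v b).
Proof. by []. Qed.

Lemma forceF_ok l i : (i < 12)%N -> leval meet5 join5 (fun k => nth N0 l k) (RR i) = nth N0 (forceF l) i.
Proof.
case: i => [|[|[|[|[|[|[|[|[|[|[|[|i]]]]]]]]]]]] h.
- by [].
- rewrite (_ : RR 1 = LJoin tW tX); last by []. by rewrite ev_join ev_tW.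
- rewrite (_ : RR 2 = LJoin tA tX); last by []. by rewrite ev_join ev_tA.
- rewrite (_ : RR 3 = LJoin tY tX); last by []. by rewrite ev_join ev_tY.
- by [].
- rewrite (_ : RR 5 = LMeet tW tX); last by []. by rewrite ev_meet ev_tW.
- rewrite (_ : RR 6 = tW); last by []. by rewrite ev_tW.
- rewrite (_ : RR 7 = tA); last by []. by rewrite ev_tA.
- rewrite (_ : RR 8 = LMeet (LJoin (LVar 4) tA) tY); last by []. by rewrite ev_meet ev_join ev_tA ev_tY.
- rewrite (_ : RR 9 = tY); last by []. by rewrite ev_tY.
- by [].
- rewrite (_ : RR 11 = LMeet (LJoin (LVar 6) tA) (LJoin tA tX)); last by []. by rewrite ev_meet (ev_join _ (LVar 6)) (ev_join _ tA) ev_tA.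
- by move: h; rewrite !ltnS.
Qed.

Definition validp (l : seq n5) (p : lterm * lterm) :=
  let rl := forceF l in
  n5eqb (leval meet5 join5 (fun i => nth N0 rl i) p.1)
        (leval meet5 join5 (fun i => nth N0 rl i) p.2).

Definition validL (ps : seq (lterm * lterm)) : bool :=
  all (fun p => lt_vars 12 p.1 && lt_vars 12 p.2) ps &&
  chk 7 (fun l => all (validp l) ps).
Definition V := LVar.
Definition ids : seq (lterm * lterm) :=
  [:: (LMeet (V 2) (LJoin (V 8) (LMeet (V 1) (V 11))), LJoin (V 7) (LMeet (V 1) (LJoin (V 8) (V 11))));
      (LMeet (V 3) (LJoin (V 10) (V 11)), LJoin (V 9) (LMeet (V 2) (LJoin (V 10) (V 11))));
      (LMeet (V 1) (LJoin (V 7) (LMeet (V 0) (V 11))), LJoin (V 6) (LMeet (V 0) (V 11)));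
      (LMeet (V 0) (LJoin (V 10) (V 11)), LMeet (LMeet (V 0) (LJoin (V 10) (V 11))) (LJoin (V 10) (LMeet (V 1) (LJoin (V 8) (V 11)))));
      (LMeet (V 0) (LJoin (V 8) (LMeet (V 1) (V 11))), LMeet (LMeet (V 0) (LJoin (V 8) (LMeet (V 1) (V 11)))) (LJoin (V 8) (LMeet (V 0) (V 11))))].

Lemma ids_valid : validL ids.
Proof. vm_compute. reflexivity. Qed.

Lemma validL_sound d (L : latticeType d) (HN : in_N L) ps (hv : validL ps)
  (u G : nat -> L)
  (hG : forall i, (i < 12)%N -> leval Order.meet Order.join u (RR i) = G i) :
  forall k, (k < size ps)%N ->
    leval Order.meet Order.join G (nth (LVar 0, LVar 0) ps k).1 =
    leval Order.meet Order.join G (nth (LVar 0, LVar 0) ps k).2.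
Proof.
case/andP: hv => hvars hchk k hk.
set p := nth (LVar 0, LVar 0) ps k.
have /andP[hv1 hv2] : lt_vars 12 p.1 && lt_vars 12 p.2.
  by move/all_nthP: hvars; apply.
have E : forall t, lt_vars 12 t -> leval Order.meet Order.join G t =
    leval Order.meet Order.join (fun i => leval Order.meet Order.join u (RR i)) t.
  by move=> t ht; apply: (leval_ext _ _ ht) => n hn; rewrite hG.
rewrite (E _ hv1) (E _ hv2) -!leval_subst.
apply: HN => v.
rewrite !leval_subst.
set l := map v (iota 0 7).
have Ev : forall i, (i < 12)%N -> leval meet5 join5 v (RR i) = nth N0 (forceF l) i.
  move=> i hi; rewrite -forceF_ok //.
  apply: (leval_ext _ _ (RR_vars i)) => n hn.
  by rewrite /l (nth_map 0) ?size_iota // nth_iota.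
rewrite (leval_ext _ _ (v' := fun i => nth N0 (forceF l) i) hv1) //.
rewrite (leval_ext _ _ (v' := fun i => nth N0 (forceF l) i) hv2) //.
apply: n5eqbP.
have := chkP hchk (l := l); rewrite size_map size_iota => /(_ erefl).
by move/all_nthP => /(_ (LVar 0, LVar 0) k hk).
Qed.

Section Gen.
Variables (T : Type) (m j : T -> T -> T) (v : nat -> T).
Local Notation ev := (leval m j v).
Lemma g_tY0 : ev tY0 = m (v 2) (v 1). Proof. by []. Qed.
Lemma g_stepY t : ev (stepY t) = j (ev tY0) (m (v 1) (j (ev t) (v 0))). Proof. by []. Qed.
Lemma g_tA0 : ev tA0 = m (v 3) (ev tY). Proof. by []. Qed.
Lemma g_stepA t : ev (stepA t) = j (ev tA0) (m (ev tY) (j (ev t) (v 0))). Proof. by []. Qed.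
Lemma g_tS : ev tS = m (j (v 4) (ev tA)) (ev tY). Proof. by []. Qed.
Lemma g_tW0 : ev tW0 = m (v 5) (ev tA). Proof. by []. Qed.
Lemma g_stepW t : ev (stepW t) = j (ev tW0) (m (ev tA) (j (ev t) (v 0))). Proof. by []. Qed.
Lemma g_tC : ev tC = m (j (v 6) (ev tA)) (j (ev tA) (v 0)). Proof. by []. Qed.
Lemma g_join a b : ev (LJoin a b) = j (ev a) (ev b). Proof. by []. Qed.
Lemma g_meet a b : ev (LMeet a b) = m (ev a) (ev b). Proof. by []. Qed.
End Gen.

Lemma incomp d (L : porderType d) (e1 e2 : L) :
  ~~ (e1 <= e2) -> ~~ (e2 <= e1) -> e1 >< e2.
Proof. by move=> h1 h2; rewrite /Order.comparable negb_or h1 h2. Qed.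

Definition GL : seq (nat * nat) :=
    [:: (0,1); (1,2); (2,3); (3,4);
        (5,6); (6,7); (7,8); (8,9); (9,10);
        (5,0); (6,1); (7,11); (11,2); (9,3); (10,4)].
Definition O12 i (h : (i < 12)%N) : 'I_12 := Ordinal h.
Lemma gen12E (u v : 'I_12) : gen12 u v = ((nat_of_ord u, nat_of_ord v) \in GL).
Proof. by []. Qed.
Lemma ord_step (u v : 'I_12) : (nat_of_ord u, nat_of_ord v) \in GL -> ord12 u v.
Proof. by move=> h; apply: connect1; rewrite gen12E. Qed.
Lemma ord_no (u v : 'I_12) (U : seq nat) : nat_of_ord u \in U -> nat_of_ord v \notin U ->
  all (fun pq => (pq.1 \in U) ==> (pq.2 \in U)) GL -> ord12 u v = false.
Proof.
move=> hu hv /allP hc; apply/negbTE/negP; case/connectP => p hp hl.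
have : nat_of_ord (last u p) \in U.
  elim: p u hu hp {hl} => [|w p ih] u hu //= /andP[huw hp].
  apply: ih hp; rewrite gen12E in huw.
  by have /implyP := hc _ huw; apply.
by rewrite -hl (negbTE hv).
Qed.

Unset Implicit Arguments.

Theorem lemma5p3 (d : Order.disp_t) (L : latticeType d) :
  in_N L ->
  (forall e : L, ~ doubly_reducible e) ->
  ~ (exists x' x b z z' w' w a s y y' c : L,
       shape12 (pts12 x' x b z z' w' w a s y y' c) /\
       exists g : nat -> nat -> L,
         iso_2x5 (gen_sub [:: x'; x; b; z; z'; w'; w; a; y; y']) g /\
         (forall j, (j < 5)%N ->
            g 0%N j = nth w' [:: w'; w; a; y; y'] j /\
            g 1%N j = nth x' [:: x'; x; b; z; z'] j)).
Proof.
move=> HN HDR [x' [x [b [z [z' [w' [w [a [s [y [y' [c H]]]]]]]]]]]].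
case: H => [[finj shp] [g [[ginj [gops gS]] gval]]].
have hwa : w <= a by rewrite (shp (@O12 6 isT) (@O12 7 isT) : (w <= a) = _) ord_step.
have has : a <= s by rewrite (shp (@O12 7 isT) (@O12 8 isT) : (a <= s) = _) ord_step.
have hsy : s <= y by rewrite (shp (@O12 8 isT) (@O12 9 isT) : (s <= y) = _) ord_step.
have hyy' : y <= y' by rewrite (shp (@O12 9 isT) (@O12 10 isT) : (y <= y') = _) ord_step.
have hac : a <= c by rewrite (shp (@O12 7 isT) (@O12 11 isT) : (a <= c) = _) ord_step.
have hcb : c <= b by rewrite (shp (@O12 11 isT) (@O12 2 isT) : (c <= b) = _) ord_step.
have hx'x : x' <= x by rewrite (shp (@O12 0 isT) (@O12 1 isT) : (x' <= x) = _) ord_step.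
have hxb : x <= b by rewrite (shp (@O12 1 isT) (@O12 2 isT) : (x <= b) = _) ord_step.
have hbz : b <= z by rewrite (shp (@O12 2 isT) (@O12 3 isT) : (b <= z) = _) ord_step.
have hx'b : x' <= b by apply: le_trans hxb.
have hx'z : x' <= z by apply: le_trans hbz.
have n71 : (a <= x) = false.
  by rewrite (shp (@O12 7 isT) (@O12 1 isT) : (a <= x) = _) (ord_no (U := [:: 7;8;9;10;3;4;11;2])).
have n92 : (y <= b) = false.
  by rewrite (shp (@O12 9 isT) (@O12 2 isT) : (y <= b) = _) (ord_no (U := [:: 9;10;3;4])).
have n119 : (c <= y) = false.
  by rewrite (shp (@O12 11 isT) (@O12 9 isT) : (c <= y) = _) (ord_no (U := [:: 11;2;3;4])).
have n010 : (x' <= y') = false.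
  by rewrite (shp (@O12 0 isT) (@O12 10 isT) : (x' <= y') = _) (ord_no (U := [:: 0;1;2;3;4])).
have n103 : (y' <= z) = false.
  by rewrite (shp (@O12 10 isT) (@O12 3 isT) : (y' <= z) = _) (ord_no (U := [:: 10;4])).
have n60 : (w <= x') = false.
  by rewrite (shp (@O12 6 isT) (@O12 0 isT) : (w <= x') = _) (ord_no (U := [:: 6;7;8;9;10;1;2;3;4;11])).
have n08 : (x' <= s) = false.
  by rewrite (shp (@O12 0 isT) (@O12 8 isT) : (x' <= s) = _) (ord_no (U := [:: 0;1;2;3;4])).
have n111 : (x <= c) = false.
  by rewrite (shp (@O12 1 isT) (@O12 11 isT) : (x <= c) = _) (ord_no (U := [:: 1;2;3;4])).
have n82 : (s <= b) = false.
  by rewrite (shp (@O12 8 isT) (@O12 2 isT) : (s <= b) = _) (ord_no (U := [:: 8;9;10;3;4])).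
have g00 : g 0 0 = w' := (gval 0 isT).1.
have g01 : g 0 1 = w := (gval 1 isT).1.
have g02 : g 0 2 = a := (gval 2 isT).1.
have g03 : g 0 3 = y := (gval 3 isT).1.
have g04 : g 0 4 = y' := (gval 4 isT).1.
have g10 : g 1 0 = x' := (gval 0 isT).2.
have g11 : g 1 1 = x := (gval 1 isT).2.
have g12 : g 1 2 = b := (gval 2 isT).2.
have g13 : g 1 3 = z := (gval 3 isT).2.
have g14 : g 1 4 = z' := (gval 4 isT).2.
have [ew' ex] : w' = w `&` x' /\ x = w `|` x'.
  by rewrite -g00 -g01 -g10 -g11; exact: (gops 0 1 1 0 isT isT isT isT).
have eb : b = a `|` x'.
  by rewrite -g02 -g10 -g12; exact: (gops 0 2 1 0 isT isT isT isT).2.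
have ez : z = y `|` x'.
  by rewrite -g03 -g10 -g13; exact: (gops 0 3 1 0 isT isT isT isT).2.
have ez' : z' = y' `|` x'.
  by rewrite -g04 -g10 -g14; exact: (gops 0 4 1 0 isT isT isT isT).2.
have ew : w = a `&` x.
  by rewrite -g01 -g02 -g11; exact: (gops 0 2 1 1 isT isT isT isT).1.
have ea : a = y `&` b.
  by rewrite -g02 -g03 -g12; exact: (gops 0 3 1 2 isT isT isT isT).1.
have ey : y = y' `&` z.
  by rewrite -g03 -g04 -g13; exact: (gops 0 4 1 3 isT isT isT isT).1.
have hay : a <= y := le_trans has hsy.
have hY : y' `&` (y `|` x') = y by rewrite -ez -ey.
have hA : y `&` (a `|` x') = a by rewrite -eb -ea.
have hW : a `&` (w `|` x') = w by rewrite -ex -ew.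
pose u := fun k => nth x' [:: x'; y'; y; a; s; w; c] k.
pose GG := fun k => nth x' [:: x'; x; b; z; z'; w'; w; a; s; y; y'; c] k.
have eY : leval Order.meet Order.join u tY = y.
  by rewrite /tY !g_stepY g_tY0 /u /= (meet_l hyy') !(hY, joinxx).
have eA : leval Order.meet Order.join u tA = a.
  by rewrite /tA !g_stepA g_tA0 eY /u /= (meet_l hay) !(hA, joinxx).
have eW : leval Order.meet Order.join u tW = w.
  by rewrite /tW !g_stepW g_tW0 eA /u /= (meet_l hwa) !(hW, joinxx).
have hG : forall i, (i < 12)%N -> leval Order.meet Order.join u (RR i) = GG i.
  case=> [|[|[|[|[|[|[|[|[|[|[|[|i]]]]]]]]]]]] h.
  - by [].
  - rewrite (_ : RR 1 = LJoin tW tX); last by []. by rewrite g_join eW /u /GG /= ex.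
  - rewrite (_ : RR 2 = LJoin tA tX); last by []. by rewrite g_join eA /u /GG /= eb.
  - rewrite (_ : RR 3 = LJoin tY tX); last by []. by rewrite g_join eY /u /GG /= ez.
  - rewrite (_ : RR 4 = LJoin tYp tX); last by []. by rewrite /u /GG /= ez'.
  - rewrite (_ : RR 5 = LMeet tW tX); last by []. by rewrite g_meet eW /u /GG /= ew'.
  - rewrite (_ : RR 6 = tW); last by []. by rewrite eW.
  - rewrite (_ : RR 7 = tA); last by []. by rewrite eA.
  - rewrite (_ : RR 8 = tS); last by [].
    by rewrite g_tS eA eY /u /= (join_l has) (meet_l hsy).
  - rewrite (_ : RR 9 = tY); last by []. by rewrite eY.
  - by [].
  - rewrite (_ : RR 11 = tC); last by [].
    by rewrite g_tC eA /u /= (join_l hac) -eb (meet_l hcb).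
  - by move: h; rewrite !ltnS.
have SND := validL_sound HN ids_valid hG.
have c0 : b `&` (s `|` (x `&` c)) = a `|` (x `&` (s `|` c)) := SND 0 isT.
have c1 : z `&` (y' `|` c) = y `|` (b `&` (y' `|` c)) := SND 1 isT.
have c2 : x `&` (a `|` (x' `&` c)) = w `|` (x' `&` c) := SND 2 isT.
have e1 : x' `&` (y' `|` c) = (x' `&` (y' `|` c)) `&` (y' `|` (x `&` (s `|` c))) := SND 3 isT.
have e2 : x' `&` (s `|` (x `&` c)) = (x' `&` (s `|` (x `&` c))) `&` (s `|` (x' `&` c)) := SND 4 isT.
have hay' : a <= y' := le_trans hay hyy'.
have hws : w <= s := le_trans hwa has.
case h1 : (x `&` (s `|` c) <= a).
  apply: (HDR (z `&` (y' `|` c))).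
  exists y, (b `&` (y' `|` c)), z, (y' `|` c); split; [|split; [|split]] => //.
  - apply: incomp.
    + apply/negP => h; move: n92; rewrite (le_trans h (leIl _ _)) //.
    + apply/negP => h; move: n119.
      have hc : c <= b `&` (y' `|` c) by rewrite lexI hcb leUr.
      by rewrite (le_trans hc h).
  - apply: incomp.
    + apply/negP => h; move: n010.
      have h2 : x' <= x' `&` (y' `|` c) by rewrite lexI lexx (le_trans hx'z h).
      have h3 : x' `&` (y' `|` c) <= y' `|` (x `&` (s `|` c)) by rewrite e1 leIr.
      have h4 : y' `|` (x `&` (s `|` c)) <= y' by rewrite leUx lexx (le_trans h1 hay').
      by rewrite (le_trans h2 (le_trans h3 h4)).
    + apply/negP => h; move: n103; rewrite (le_trans (leUl _ _) h) //.
case h2 : (b <= s `|` (x `&` c)).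
  apply: (HDR (x `&` (a `|` (x' `&` c)))).
  exists w, (x' `&` c), x, (a `|` (x' `&` c)); split; [|split; [|split]] => //.
  - apply: incomp.
    + apply/negP => h; move: n60; rewrite (le_trans h (leIl _ _)) //.
    + apply/negP => h; move: n08.
      have h3 : x' <= x' `&` (s `|` (x `&` c)) by rewrite lexI lexx (le_trans hx'b h2).
      have h4 : x' `&` (s `|` (x `&` c)) <= s `|` (x' `&` c) by rewrite e2 leIr.
      have h5 : s `|` (x' `&` c) <= s by rewrite leUx lexx (le_trans h hws).
      by rewrite (le_trans h3 (le_trans h4 h5)).
  - apply: incomp.
    + apply/negP => h; move: n111.
      have h3 : a `|` (x' `&` c) <= c by rewrite leUx hac leIr.
      by rewrite (le_trans h h3).
    + apply/negP => h; move: n71; rewrite (le_trans (leUl _ _) h) //.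
apply: (HDR (b `&` (s `|` (x `&` c)))).
exists a, (x `&` (s `|` c)), b, (s `|` (x `&` c)); split; [|split; [|split]] => //.
- apply: incomp; last by rewrite h1.
  apply/negP => h; move: n71; rewrite (le_trans h (leIl _ _)) //.
- apply: incomp; first by rewrite h2.
  apply/negP => h; move: n82; rewrite (le_trans (leUl _ _) h) //.
Qed.
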